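(* Let $H_1,H_2\in\mathcal O$, let $\lambda_1,\dots,\lambda_N$ be the eigenvalues of $H_2$ with orthonormal eigenvectors $\psi_1,\dots,\psi_N$, and assume (i) $(H_1\psi_k,\psi_j)\ne0$ for all $k\ne j$ and (ii) $\lambda_k-\lambda_l\ne\lambda_{k'}-\lambda_{l'}$ for all ordered pairs $(k,l)\ne(k',l')$. Then $E_{k,j}\in\mathcal L(H_1,H_2)$ for all $k\neq j\in\{1,\dots,N\}$.
   Context: $\mathcal H=\mathbb C^N$, $N>1$; $\mathcal O$ is the real vector space of Hermitian operators with bracket $\{A,B\}=i(AB-BA)$; $\mathcal L(H_1,H_2)$ is the real linear span of $H_1,H_2$ and all iterated brackets of them. $E_{k,j}$ is the Hermitian operator with $(E_{k,j}\psi_{k'},\psi_{j'})=1$ if $k'=j'=k$, $=-1$ if $k'=j'=j$, and $=0$ otherwise (i.e. diagonal in the basis $\psi_1,\dots,\psi_N$ with entry $1$ at $k$, $-1$ at $j$). *)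

(* Defs.v *)
From HB Require Import structures.
From mathcomp Require Import all_boot all_order all_algebra.
Set Implicit Arguments. Unset Strict Implicit. Unset Printing Implicit Defensive.
Import Order.TTheory GRing.Theory Num.Theory.
Local Open Scope ring_scope.

Section Defs.
Variable C : numClosedFieldType.

Definition adjmx (m n : nat) (A : 'M[C]_(m, n)) : 'M[C]_(n, m) :=
  (map_mx Num.conj A)^T.

Definition is_hermitian (N : nat) (A : 'M[C]_N) : Prop := adjmx A = A.

(* inner product (x, y) = sum_i x_i * conj(y_i), linear in the first slot *)
Definition inner (N : nat) (x y : 'cV[C]_N) : C :=
  \sum_(i < N) x i 0 * (y i 0)^*.

Definition lbr (N : nat) (A B : 'M[C]_N) : 'M[C]_N :=
  'i *: (A *m B - B *m A).

Inductive iter_bracket (N : nat) (H1 H2 : 'M[C]_N) : 'M[C]_N -> Prop :=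
| ib_H1 : iter_bracket H1 H2 H1
| ib_H2 : iter_bracket H1 H2 H2
| ib_br A B : iter_bracket H1 H2 A -> iter_bracket H1 H2 B ->
              iter_bracket H1 H2 (lbr A B).

Definition lie_span (N : nat) (H1 H2 : 'M[C]_N) (X : 'M[C]_N) : Prop :=
  exists s : seq (C * 'M[C]_N),
    (forall p, p \in s -> p.1 \is Num.real /\ iter_bracket H1 H2 p.2) /\
    X = \sum_(p <- s) p.1 *: p.2.

(* E_{k,j} relative to the orthonormal basis given by the columns of U:
   psi_k psi_k^* - psi_j psi_j^* *)
Definition Emx (N : nat) (U : 'M[C]_N) (k j : 'I_N) : 'M[C]_N :=
  col k U *m adjmx (col k U) - col j U *m adjmx (col j U).

End Defs.

(* Main.v *)
Require Import Defs.
From HB Require Import structures.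
From mathcomp Require Import all_boot all_order all_algebra.
From mathcomp Require Import ring.
Import Order.TTheory GRing.Theory Num.Theory.
Local Open Scope ring_scope.

Section Span.
Variables (C : numClosedFieldType) (N : nat) (H1 H2 : 'M[C]_N).

Lemma lbrDl (A A' B : 'M[C]_N) : lbr (A + A') B = lbr A B + lbr A' B.
Proof.
rewrite /lbr mulmxDl mulmxDr -scalerDr; congr (_ *: _).
by rewrite opprD addrACA.
Qed.

Lemma lbrZl (a : C) (A B : 'M[C]_N) : lbr (a *: A) B = a *: lbr A B.
Proof.
by rewrite /lbr -scalemxAl -scalemxAr -scalerBr !scalerA mulrC.
Qed.

Lemma lbr0l (B : 'M[C]_N) : lbr 0 B = 0.
Proof. by rewrite /lbr mul0mx mulmx0 subrr scaler0. Qed.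

Lemma lbrDr (A B B' : 'M[C]_N) : lbr A (B + B') = lbr A B + lbr A B'.
Proof.
rewrite /lbr mulmxDl mulmxDr -scalerDr; congr (_ *: _).
by rewrite opprD addrACA.
Qed.

Lemma lbrZr (a : C) (A B : 'M[C]_N) : lbr A (a *: B) = a *: lbr A B.
Proof.
by rewrite /lbr -scalemxAl -scalemxAr -scalerBr !scalerA mulrC.
Qed.

Lemma lbr0r (B : 'M[C]_N) : lbr B 0 = 0.
Proof. by rewrite /lbr mul0mx mulmx0 subrr scaler0. Qed.

Lemma lbr_sumL (s : seq (C * 'M[C]_N)) B :
  lbr (\sum_(p <- s) p.1 *: p.2) B = \sum_(p <- s) p.1 *: lbr p.2 B.
Proof.
elim: s => [|p s IH]; first by rewrite !big_nil lbr0l.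
by rewrite !big_cons lbrDl lbrZl IH.
Qed.

Lemma lbr_sumR (s : seq (C * 'M[C]_N)) B :
  lbr B (\sum_(p <- s) p.1 *: p.2) = \sum_(p <- s) p.1 *: lbr B p.2.
Proof.
elim: s => [|p s IH]; first by rewrite !big_nil lbr0r.
by rewrite !big_cons lbrDr lbrZr IH.
Qed.

Lemma span_gen X : iter_bracket H1 H2 X -> lie_span H1 H2 X.
Proof.
move=> hX; exists [:: (1, X)]; split.
  by move=> p; rewrite inE => /eqP -> /=; split => //; apply: rpred1.
by rewrite big_cons big_nil addr0 scale1r.
Qed.

Lemma span_add X Y : lie_span H1 H2 X -> lie_span H1 H2 Y -> lie_span H1 H2 (X + Y).
Proof.
move=> [s [hs ->]] [t [ht ->]]; exists (s ++ t); split; last by rewrite big_cat.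
by move=> p; rewrite mem_cat => /orP [/hs|/ht].
Qed.

Lemma span_scale (a : C) X : a \is Num.real -> lie_span H1 H2 X -> lie_span H1 H2 (a *: X).
Proof.
move=> ha [s [hs ->]]; exists [seq (a * p.1, p.2) | p <- s]; split.
  move=> q /mapP [p /hs [h1 h2] ->] /=; split => //; exact: rpredM.
by rewrite big_map scaler_sumr; apply: eq_bigr => p _ /=; rewrite scalerA.
Qed.

Lemma span_lbr X Y : lie_span H1 H2 X -> lie_span H1 H2 Y -> lie_span H1 H2 (lbr X Y).
Proof.
move=> [s [hs ->]] [t [ht ->]].
exists [seq (p.1 * q.1, lbr p.2 q.2) | p <- s, q <- t]; split.
  move=> r /allpairsP [[p q] [/hs [hp1 hp2] /ht [hq1 hq2] ->]] /=.
  by split; [apply: rpredM | apply: ib_br].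
rewrite big_allpairs_dep lbr_sumL; apply: eq_bigr => p _.
rewrite lbr_sumR scaler_sumr; apply: eq_bigr => q _ /=.
by rewrite scalerA.
Qed.

End Span.

Section Diag.
Variables (C : numClosedFieldType) (N : nat) (M : 'M[C]_N) (lam : 'I_N -> C).
Variable P : 'M[C]_N -> Prop.
Hypothesis PM : P M.
Hypothesis PD : P (diag_mx (\row_i lam i)).
Hypothesis Padd : forall X Y, P X -> P Y -> P (X + Y).
Hypothesis Pscale : forall (a : C) X, a \is Num.real -> P X -> P (a *: X).
Hypothesis Plbr : forall X Y, P X -> P Y -> P (lbr X Y).
Hypothesis Mherm : forall a b, M b a = (M a b)^*.
Hypothesis lamR : forall a, lam a \is Num.real.
Hypothesis Moff : forall a b, a != b -> M a b != 0.
Hypothesis hii : forall k l k' l' : 'I_N, k != l -> k' != l' -> (k, l) != (k', l') ->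
           lam k - lam l != lam k' - lam l'.

Let D := diag_mx (\row_i lam i).
Let d a b := lam a - lam b.

Lemma lbrD_entry X a b : lbr D X a b = 'i * (d a b * X a b).
Proof.
rewrite /lbr /D mul_diag_mx mul_mx_diag !mxE /d; ring.
Qed.

Lemma addE (A B : 'M[C]_N) a b : (A + B) a b = A a b + B a b.
Proof. by rewrite mxE. Qed.
Lemma scaleE (c : C) (A : 'M[C]_N) a b : (c *: A) a b = c * A a b.
Proof. by rewrite mxE. Qed.

Definition Fop (c : C) X := lbr D (lbr D X) + c *: X.

Lemma Fop_entry c X a b : Fop c X a b = (c - d a b ^+ 2) * X a b.
Proof.
rewrite /Fop addE !lbrD_entry scaleE.
have -> : 'i * (d a b * ('i * (d a b * X a b))) = ('i ^+ 2) * (d a b ^+ 2 * X a b) by ring.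
rewrite sqrCi; ring.
Qed.

Lemma Fop_P c X : c \is Num.real -> P X -> P (Fop c X).
Proof. by move=> hc hX; apply: Padd; [apply: Plbr => //; apply: Plbr|apply: Pscale]. Qed.

Definition Gop (cs : seq C) X := foldr Fop X cs.

Lemma Gop_entry cs X a b : Gop cs X a b = (\prod_(c <- cs) (c - d a b ^+ 2)) * X a b.
Proof.
elim: cs => [|c cs IH] /=; first by rewrite big_nil mul1r.
by rewrite Fop_entry IH big_cons mulrA.
Qed.

Lemma Gop_P cs X : all (fun c => c \is Num.real) cs -> P X -> P (Gop cs X).
Proof.
elim: cs => [|c cs IH] //= /andP [hc hcs] hX; apply: Fop_P => //; exact: IH.
Qed.

Lemma dR a b : d a b \is Num.real.
Proof. by rewrite /d rpredB. Qed.

Lemma d_neq0 k l : k != l -> d k l != 0.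
Proof.
move=> kl; apply/negP => /eqP h0.
have lk : l != k by rewrite eq_sym.
have hp : (k, l) != (l, k) by rewrite xpair_eqE (negbTE kl).
have := @hii k l l k kl lk hp; rewrite -/(d k l) -/(d l k).
rewrite /d -[lam l - lam k]opprB; move: h0; rewrite /d => ->; by rewrite oppr0 eqxx.
Qed.

Lemma prod_real_seq (cs : seq C) x : x \is Num.real -> all (fun c => c \is Num.real) cs ->
  \prod_(c <- cs) (c - x) \is Num.real.
Proof.
move=> hx; elim: cs => [|c cs IH] /=; first by rewrite big_nil rpred1.
by move=> /andP [hc hcs]; rewrite big_cons rpredM ?rpredB // IH.
Qed.

Lemma lbrDdelta a b : lbr D (delta_mx a b) = ('i * d a b) *: delta_mx a b.
Proof.
apply/matrixP => x y; rewrite lbrD_entry !mxE.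
by case: (eqVneq x a) => [->|_]; case: (eqVneq y b) => [->|_]; rewrite /= ?mulr0 ?mulr1 ?mulrA.
Qed.

Lemma lbr_self (A : 'M[C]_N) : lbr A A = 0.
Proof. by rewrite /lbr subrr scaler0. Qed.

Lemma lbr_swap a b : lbr (delta_mx a b : 'M[C]_N) (delta_mx b a) = 'i *: (delta_mx a a - delta_mx b b).
Proof. by rewrite /lbr !mul_delta_mx. Qed.

Lemma final_diag k l : k != l -> P (delta_mx k k - delta_mx l l).
Proof.
move=> kl.
have lk : l != k by rewrite eq_sym.
set cs := 0 :: [seq d p.1 p.2 ^+ 2 | p <- enum [pred p : 'I_N * 'I_N |
            (p.1 != p.2) && (p != (k, l)) && (p != (l, k))]].
have csR : all (fun c => c \is Num.real) cs.
  rewrite /= rpred0 /=; apply/allP => c /mapP [p _ ->]; exact/rpredX/dR.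
set kap := \prod_(c <- cs) (c - d k l ^+ 2).
have kapR : kap \is Num.real by apply: prod_real_seq => //; exact/rpredX/dR.
have kap0 : kap != 0.
  rewrite /kap prodf_seq_eq0; apply/hasPn => c; rewrite inE => /orP [/eqP -> | ].
    by rewrite /= sub0r oppr_eq0 expf_eq0 /= d_neq0.
  move=> /mapP [[a b]]; rewrite mem_enum inE /= => /andP [/andP [ab h1] h2] ->.
  rewrite subr_sqr mulf_eq0 negb_or subr_eq0 addr_eq0; apply/andP; split.
    exact: hii.
  by rewrite /d opprB; apply: hii.
have dlk : d l k ^+ 2 = d k l ^+ 2 by rewrite /d -sqrrN opprB.
have GM : Gop cs M = kap *: (M k l *: delta_mx k l + M l k *: delta_mx l k).
  apply/matrixP => a b; rewrite Gop_entry !mxE.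
  case: (eqVneq (a, b) (k, l)) => [[-> ->]|h1].
    by rewrite !eqxx (negbTE kl) (negbTE lk) /= mulr1 mulr0 addr0 mulrC.
  case: (eqVneq (a, b) (l, k)) => [[-> ->]|h2].
    by rewrite dlk !eqxx (negbTE lk) /= mulr1 mulr0 add0r mulrC.
  have -> : (a == k) && (b == l) = false by apply/negbTE; rewrite -xpair_eqE.
  have -> : (a == l) && (b == k) = false by apply/negbTE; rewrite -xpair_eqE.
  rewrite !mulr0 addr0 mulr0.
  have -> : \prod_(c <- cs) (c - d a b ^+ 2) = 0; last by rewrite mul0r.
  apply/eqP; rewrite prodf_seq_eq0; apply/hasP.
  case: (eqVneq a b) => [<-|ab].
    by exists 0; rewrite ?mem_head //= /d subrr expr0n /= subrr.
  exists (d a b ^+ 2); last by rewrite /= subrr.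
  rewrite inE; apply/orP; right; apply/mapP; exists (a, b) => //.
  by rewrite mem_enum inE /= ab h1 h2.
set X0 := M k l *: delta_mx k l + M l k *: delta_mx l k.
have PX0 : P X0.
  have -> : X0 = kap^-1 *: Gop cs M by rewrite GM scalerA mulVf // scale1r.
  by apply: Pscale; [rewrite rpredV | apply: Gop_P].
have PY : P (lbr D X0) by apply: Plbr.
have PZ := Plbr _ _ PX0 PY.
have hY : lbr D X0 = M k l *: (('i * d k l) *: delta_mx k l) + M l k *: (('i * d l k) *: delta_mx l k).
  by rewrite /X0 lbrDr !lbrZr !lbrDdelta.
rewrite hY in PZ.
set k2 := 'i * 'i * (M k l * M l k) * (d l k - d k l).
have hZ : lbr X0 (M k l *: (('i * d k l) *: delta_mx k l) + M l k *: (('i * d l k) *: delta_mx l k))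
   = k2 *: (delta_mx k k - delta_mx l l).
  rewrite /X0 !lbrDl !lbrZl !lbrDr !lbrZr !lbr_self lbr_swap lbr_swap.
  by apply/matrixP => x y; rewrite !mxE /k2; ring.
rewrite hZ in PZ.
have k2R : k2 \is Num.real.
  rewrite /k2 -expr2 sqrCi rpredM ?rpredB ?dR //.
  by rewrite rpredM ?rpredN ?rpred1 // Mherm; apply: ger0_real; rewrite mulrC mul_conjC_ge0.
have k20 : k2 != 0.
  rewrite /k2 -expr2 sqrCi !mulf_neq0 ?oppr_eq0 ?oner_eq0 //.
    by apply: Moff.
    by apply: Moff.
  by rewrite subr_eq0; apply: hii => //; rewrite xpair_eqE (negbTE lk).
have -> : delta_mx k k - delta_mx l l = k2^-1 *: (k2 *: (delta_mx k k - delta_mx l l) : 'M[C]_N).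
  by rewrite scalerA mulVf // scale1r.
by apply: Pscale => //; rewrite rpredV.
Qed.

End Diag.

Section Main.
Variables (C : numClosedFieldType) (N : nat).

Lemma adjmxM m n p (A : 'M[C]_(m, n)) (B : 'M[C]_(n, p)) :
  adjmx (A *m B) = adjmx B *m adjmx A.
Proof. by rewrite /adjmx map_mxM trmx_mul. Qed.

Lemma adjmx_entry m n (A : 'M[C]_(m, n)) i j : adjmx A i j = (A j i)^*.
Proof. by rewrite !mxE. Qed.

Lemma conj_mul (U V X Y : 'M[C]_N) : V *m U = 1%:M ->
  (U *m X *m V) *m (U *m Y *m V) = U *m (X *m Y) *m V.
Proof.
move=> hVU; rewrite -!mulmxA [V *m (U *m _)]mulmxA hVU mul1mx.
by rewrite !mulmxA.
Qed.

Lemma conj_lbr (U V X Y : 'M[C]_N) : V *m U = 1%:M ->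
  U *m lbr X Y *m V = lbr (U *m X *m V) (U *m Y *m V).
Proof.
move=> hVU; rewrite /lbr !conj_mul // -scalemxAr -scalemxAl.
by rewrite mulmxBr mulmxBl.
Qed.

Lemma hermitian_conj (U H : 'M[C]_N) : is_hermitian H ->
  adjmx (adjmx U *m H *m U) = adjmx U *m H *m U.
Proof.
move=> hH; rewrite !adjmxM hH.
have -> : adjmx (adjmx U) = U by apply/matrixP => a b; rewrite !mxE conjCK.
by rewrite mulmxA.
Qed.

End Main.

Theorem mainTheorem8 (C : numClosedFieldType) (N : nat) (hN : (1 < N)%N)
  (H1 H2 : 'M[C]_N) (hH1 : is_hermitian H1) (hH2 : is_hermitian H2)
  (U : 'M[C]_N) (lambda : 'I_N -> C)
  (hON : adjmx U *m U = 1%:M)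
  (hEig : forall k : 'I_N, H2 *m col k U = lambda k *: col k U)
  (hi : forall k j : 'I_N, k != j -> inner (H1 *m col k U) (col j U) != 0)
  (hii : forall k l k' l' : 'I_N, k != l -> k' != l' -> (k, l) != (k', l') ->
           lambda k - lambda l != lambda k' - lambda l') :
  forall k j : 'I_N, k != j -> lie_span H1 H2 (Emx U k j).
Proof.
move=> k j kj.
have hON' : U *m adjmx U = 1%:M by apply: mulmx1C.
set V := adjmx U.
set M := V *m H1 *m U.
set D := diag_mx (\row_i lambda i).
have hH1e : H1 = U *m M *m V.
  by rewrite /M !mulmxA hON' mul1mx -mulmxA hON' mulmx1.
have colM : forall (A B : 'M[C]_N) c, A *m col c B = col c (A *m B).
  by move=> A B c; rewrite !colE mulmxA.
have hH2U : H2 *m U = U *m D.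
  apply/matrixP => a b; rewrite mul_mx_diag !mxE.
  have := congr1 (fun A : 'cV[C]_N => A a ord0) (hEig b).
  rewrite colM !mxE => ->; exact: mulrC.
have hH2e : H2 = U *m D *m V by rewrite -hH2U -mulmxA hON' mulmx1.
have hDe : D = V *m H2 *m U by rewrite -mulmxA hH2U mulmxA hON mul1mx.
have lamR : forall a, lambda a \is Num.real.
  move=> a; rewrite CrealE.
  have := congr1 (fun A : 'M[C]_N => A a a) (@hermitian_conj _ _ U _ hH2).
  rewrite -/V -hDe adjmx_entry /D !mxE eqxx /= !mulr1n => ->; exact: eqxx.
have Mherm : forall a b, M b a = (M a b)^*.
  move=> a b; have := congr1 (fun A : 'M[C]_N => A b a) (@hermitian_conj _ _ U _ hH1).
  by rewrite -/V -/M adjmx_entry => ->.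
have Moff : forall a b, a != b -> M a b != 0.
  move=> a b ab; have ba : b != a by rewrite eq_sym.
  have := hi b a ba; apply: contra => /eqP h0; apply/eqP; rewrite -h0.
  rewrite /inner /M -mulmxA mxE; apply: eq_bigr => i _.
  by rewrite colM !mxE mulrC.
have hE : Emx U k j = U *m (delta_mx k k - delta_mx j j) *m V.
  have hc : forall c : 'I_N, col c U *m adjmx (col c U) = U *m delta_mx c c *m V.
    move=> c; rewrite colE adjmxM.
    have -> : adjmx (delta_mx c 0 : 'cV[C]_N) = delta_mx 0 c.
      by apply/matrixP => x y; rewrite !mxE conjC_nat andbC.
    by rewrite mulmxA -[U *m _ *m _]mulmxA mul_delta_mx.
  by rewrite /Emx !hc mulmxBr mulmxBl.
rewrite hE.
pose P := fun Y => lie_span H1 H2 (U *m Y *m V).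
apply: (@final_diag C N M lambda P) => //.
- by rewrite /P -hH1e; apply: span_gen; apply: ib_H1.
- by rewrite /P -hH2e; apply: span_gen; apply: ib_H2.
- by move=> X Y; rewrite /P mulmxDr mulmxDl; apply: span_add.
- by move=> a X ha; rewrite /P -scalemxAr -scalemxAl; apply: span_scale.
- by move=> X Y; rewrite /P conj_lbr //; apply: span_lbr.
Qed.
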